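(* Let $(x_n,y_n)_{n=1}^N$ be labeled points with $x_n$ in a bounded subset of $\mathbb{H}^{d}$ and $y_n\in\{-1,1\}$, and assume the point set is linearly separable with margin $\varepsilon>0$, i.e. there is $w^*\in\mathbb{R}^{d+1}$ with $[w^*,w^*]=-C_{\mathbb H}$ and $y_n\,\mathrm{asinh}([w^*,x_n])\ge\varepsilon$ for all $n$. Consider the hyperbolic perceptron: start with $w^0=0\in\mathbb{R}^{d+1}$, cycle through $n=1,\dots,N,1,\dots$, and whenever $\mathrm{sgn}([w^k,x_n])\ne y_n$ update $w^{k+1}=w^k+y_nHx_n$. Then this perceptron converges in $O\big(1/\sinh^2(\varepsilon)\big)$ steps.
   Context: $\mathbb{H}^{d}=\{x\in\mathbb{R}^{d+1}:[x,x]=C_{\mathbb H}^{-1},x_1>0\}$ is the Lorentz ('Loid) model of hyperbolic space with curvature $C_{\mathbb H}<0$, where $[u,v]=u^\top Hv$ and $H=\mathrm{diag}(-1,1,\dots,1)\in\mathbb{R}^{(d+1)\times(d+1)}$. Convergence means that after the stated number of updates all points are correctly classified by $x\mapsto\mathrm{sgn}([w^k,x])$. *)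

(* Defs.v *)
From mathcomp Require Import all_boot all_order all_algebra.
From mathcomp Require Import all_classical all_reals all_analysis.
Set Implicit Arguments. Unset Strict Implicit. Unset Printing Implicit Defensive.
Import Order.TTheory GRing.Theory Num.Theory.
Local Open Scope ring_scope.

Definition sinh {R : realType} (x : R) : R := (expR x - expR (- x)) / 2.
Definition asinh {R : realType} (x : R) : R := ln (x + Num.sqrt (x ^+ 2 + 1)).

Definition minkH {R : realType} (d : nat) : 'M[R]_(d.+1) :=
  diag_mx (\row_(i < d.+1) (if i == ord0 then -1 else 1)).

Definition mink {R : realType} {d : nat} (u v : 'cV[R]_(d.+1)) : R :=
  (u^T *m minkH d *m v) ord0 ord0.

Definition in_loid {R : realType} {d : nat} (C : R) (x : 'cV[R]_(d.+1)) : Prop :=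
  mink x x = C^-1 /\ 0 < x ord0 ord0.

Definition eucl_norm2 {R : realType} {d : nat} (v : 'cV[R]_(d.+1)) : R :=
  \sum_(i < d.+1) v i ord0 ^+ 2.

(* Hyperbolic perceptron, processed point by point cyclically (n = t mod N).
   perc_traj x y t = (w, k): weight vector after processing t points,
   and number k of updates performed so far.  w^0 = 0;
   update w <- w + y_n H x_n whenever sgn([w,x_n]) <> y_n. *)
Fixpoint perc_traj {R : realType} {d N : nat}
    (x : 'I_N -> 'cV[R]_(d.+1)) (y : 'I_N -> R) (t : nat)
    : 'cV[R]_(d.+1) * nat :=
  match t with
  | 0 => (0, 0%N)
  | t'.+1 =>
      let: (w, k) := perc_traj x y t' in
      match (insub (t' %% N)%N : option 'I_N) with
      | Some n =>
          if Num.sg (mink w (x n)) != y n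
          then (w + y n *: (minkH d *m x n), k.+1)
          else (w, k)
      | None => (w, k)
      end
  end.

(* Main.v *)
Require Import Defs.
From mathcomp Require Import all_boot all_order all_algebra.
From mathcomp Require Import all_classical all_reals all_analysis.
From mathcomp Require Import ring lra zify.
Import Order.TTheory GRing.Theory Num.Theory.
Local Open Scope ring_scope.
Set Implicit Arguments. Unset Strict Implicit.

Section Real.
Variable R : realType.

Lemma sinh_asinh (m : R) : sinh (asinh m) = m.
Proof.
rewrite /sinh /asinh.
set r := Num.sqrt (m ^+ 2 + 1).
have r0 : 0 <= r by apply: sqrtr_ge0.
have r2 : r ^+ 2 = m ^+ 2 + 1 by rewrite sqr_sqrtr // addr_ge0 // ?sqr_ge0.
have a0 : 0 < m + r by nra.
rewrite expRN lnK ?posrE //.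
have -> : (m + r)^-1 = r - m.
  apply: (@mulfI _ (m + r)); first by rewrite lt0r_neq0.
  rewrite mulfV ?lt0r_neq0 //; nra.
by field.
Qed.

Lemma sinh_le (a b : R) : a <= b -> sinh a <= sinh b.
Proof.
move=> ab; rewrite /sinh ler_pM2r ?invr_gt0 //.
apply: lerB; first by rewrite ler_expR.
by rewrite ler_expR lerN2.
Qed.

Lemma sinhN (a : R) : sinh (- a) = - sinh a.
Proof. by rewrite /sinh opprK; field. Qed.

Lemma sinh_gt0 (a : R) : 0 < a -> 0 < sinh a.
Proof.
move=> a0; rewrite /sinh divr_gt0 // subr_gt0 ltr_expR; lra.
Qed.

Lemma margin (y m e : R) : (y = 1 \/ y = -1) -> e <= y * asinh m -> sinh e <= y * m.
Proof.
case=> -> h.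
  by rewrite mul1r -[X in _ <= X](sinh_asinh m); apply: sinh_le; rewrite mul1r in h.
rewrite mulN1r -[X in _ <= - X](sinh_asinh m) -sinhN; apply: sinh_le; by rewrite mulN1r in h.
Qed.

Lemma mistake (y m : R) : (y = 1 \/ y = -1) -> Num.sg m != y -> y * m <= 0.
Proof.
case=> ->; case: (ltgtP m 0) => h.
- move=> _; lra.
- by rewrite gtr0_sg // eqxx.
- move=> _; rewrite h; lra.
- by rewrite ltr0_sg // eqxx.
- move=> _; lra.
- move=> _; rewrite h; lra.
Qed.

Lemma quad (P Q S : R) : 0 <= S -> (forall l, 0 <= Q - 2 * l * P + l ^+ 2 * S) -> P ^+ 2 <= Q * S.
Proof.
move=> S0 H.
case: (ltgtP S 0) => hS; first lra.
  have := H (P / S).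
  have -> : Q - 2 * (P / S) * P + (P / S) ^+ 2 * S = (Q * S - P ^+ 2) / S by field; rewrite lt0r_neq0.
  by rewrite pmulr_lge0 ?invr_gt0 // subr_ge0.
rewrite hS mulr0.
case: (eqVneq P 0) => [->|hP]; first by rewrite expr2 mulr0.
have := H ((Q + 1) / (2 * P)).
rewrite hS mulr0 addr0.
have -> : Q - 2 * ((Q + 1) / (2 * P)) * P = -1 by field.
lra.
Qed.
End Real.

Section Vec.
Variable R : realType.
Variable d : nat.
Definition dot (u v : 'cV[R]_(d.+1)) : R := (u^T *m v) ord0 ord0.

Lemma dotE u v : dot u v = \sum_i u i ord0 * v i ord0.
Proof. by rewrite /dot mxE; apply: eq_bigr => i _; rewrite mxE. Qed.

Lemma minkE u v : mink u v = dot u (minkH d *m v).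
Proof. by rewrite /mink /dot mulmxA. Qed.

Lemma dotC u v : dot u v = dot v u.
Proof. by rewrite !dotE; apply: eq_bigr => i _; rewrite mulrC. Qed.

Lemma dotDZr u v z (c : R) : dot u (v + c *: z) = dot u v + c * dot u z.
Proof. by rewrite /dot mulmxDr -scalemxAr !mxE. Qed.

Lemma dot_expand w z (c : R) : dot (w + c *: z) (w + c *: z) = dot w w + 2 * c * dot w z + c ^+ 2 * dot z z.
Proof.
rewrite dotDZr [dot (w + _) w]dotC [dot (w + _) z]dotC !dotDZr (dotC z w).
by ring.
Qed.

Lemma dot_ge0 u : 0 <= dot u u.
Proof. by rewrite dotE sumr_ge0 // => i _; rewrite -expr2 sqr_ge0. Qed.

Lemma HxE (v : 'cV[R]_(d.+1)) i : (minkH d *m v) i ord0 = (if i == ord0 then -1 else 1) * v i ord0.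
Proof. by rewrite /minkH mul_diag_mx mxE mxE. Qed.

Lemma dotHH v : dot (minkH d *m v) (minkH d *m v) = eucl_norm2 v.
Proof.
rewrite dotE /eucl_norm2; apply: eq_bigr => i _; rewrite !HxE.
by case: (i == ord0); rewrite expr2; ring.
Qed.

Lemma quadCS (a b : 'cV[R]_(d.+1)) : dot a b ^+ 2 <= dot a a * dot b b.
Proof.
apply: quad; first exact: dot_ge0.
move=> l; have := dot_ge0 (a + (- l) *: b).
rewrite dotDZr [dot (a + _) a]dotC [dot (a + _) b]dotC !dotDZr (dotC b a).
have -> : dot a a + - l * dot a b + - l * (dot a b + - l * dot b b) = dot a a - 2 * l * dot a b + l ^+ 2 * dot b b by ring.
done.
Qed.
End Vec.

Lemma nat_stall (f : nat -> nat) (L Kn : nat) :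
  (forall t, (f t <= f (t + L))%N) -> (forall t, (f t <= Kn)%N) ->
  exists t, f (t + L) = f t.
Proof.
move=> mono bnd.
have H : forall j, (exists t, f (t + L) = f t) \/ (j <= f (j * L))%N.
  elim=> [|j [IH|IH]]; [by right| by left|].
  have := mono (j * L); rewrite leq_eqVlt => /orP[/eqP e|lt]; first by left; exists (j * L).
  by right; rewrite mulSn addnC; exact: leq_ltn_trans IH lt.
case: (H Kn.+1) => [//|h]; by move: (leq_trans h (bnd _)); rewrite ltnn.
Qed.

Section Traj.
Variable R : realType.
Variables (d N : nat) (x : 'I_N -> 'cV[R]_(d.+1)) (y : 'I_N -> R).
Notation traj := (perc_traj x y).

Lemma traj_S t (n : 'I_N) : (t %% N)%N = n ->
  traj t.+1 = if Num.sg (mink (traj t).1 (x n)) != y n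
              then ((traj t).1 + y n *: (minkH d *m x n), (traj t).2.+1) else traj t.
Proof.
move=> Ht /=; case: (traj t) => w k /=.
rewrite Ht.
by have -> : (insub (nat_of_ord n) : option 'I_N) = Some n := valK n.
Qed.


Hypothesis N0 : (0 < N)%N.

Lemma traj_mono t : ((traj t).2 <= (traj t.+1).2)%N.
Proof.
have Ht : (t %% N)%N = Ordinal (ltn_pmod t N0) by [].
rewrite (traj_S Ht).
by case: ifP => //= _.
Qed.

Lemma traj_stay t (n : 'I_N) : (t %% N)%N = n -> (traj t.+1).2 = (traj t).2 ->
  traj t.+1 = traj t /\ Num.sg (mink (traj t).1 (x n)) = y n.
Proof.
move=> Ht; rewrite (traj_S Ht); case: ifP => /= [_ |/negbFE/eqP]; last by [].
by move=> /= e; exfalso; lia.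
Qed.

Lemma traj_monoD t i : ((traj t).2 <= (traj (t + i)).2)%N.
Proof.
elim: i => [|i IH]; first by rewrite addn0.
by rewrite addnS; apply: leq_trans IH (traj_mono _).
Qed.

Lemma traj_const t L : (traj (t + L)).2 = (traj t).2 ->
  forall i, (i <= L)%N -> traj (t + i) = traj t.
Proof.
move=> eL; elim=> [|i IH] iL; first by rewrite addn0.
have iL' : (i <= L)%N by apply: ltnW.
have e : (traj (t + i).+1).2 = (traj (t + i)).2.
  apply/eqP; rewrite eqn_leq traj_mono andbT.
  have := traj_monoD (t + i).+1 (L - i.+1).
  have -> : ((t + i).+1 + (L - i.+1) = t + L)%N by lia.
  by rewrite eL IH.
have Ht : ((t + i) %% N)%N = Ordinal (ltn_pmod (t + i) N0) by [].
rewrite addnS; have [-> _] := traj_stay Ht e.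
exact: IH.
Qed.

Variables (B : R) (wstar : 'cV[R]_(d.+1)) (eps : R).
Hypothesis hB : forall n, eucl_norm2 (x n) <= B.
Hypothesis hy : forall n, y n = 1 \/ y n = -1.
Hypothesis hm : forall n, eps <= y n * asinh (mink wstar (x n)).

Lemma traj_inv t : sinh eps * (traj t).2%:R <= dot wstar (traj t).1 /\
  dot (traj t).1 (traj t).1 <= (traj t).2%:R * B.
Proof.
elim: t => [|t [IH1 IH2]].
  by rewrite /= /dot !mul0r mulmx0 trmx0 mul0mx !mxE; lra.
set n := Ordinal (ltn_pmod t N0).
have Ht : (t %% N)%N = n by [].
rewrite (traj_S Ht); case: ifP => // mis /=.
move: IH1 IH2 mis; set w := (traj t).1; set k := (traj t).2 => IH1 IH2 mis.
have hmis := mistake (hy n) mis.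
have hmar := margin (hy n) (hm n).
have hb := hB n.
rewrite -addn1 natrD dotDZr -minkE.
rewrite dot_expand -minkE dotHH.
by case: (hy n) hmis hmar => -> hmis hmar; split; nra.
Qed.
End Traj.

Theorem theorem4 (R : realType) (CH : R) (d : nat) (B M : R) :
  CH < 0 ->
  exists K : R, forall (N : nat) (x : 'I_N -> 'cV[R]_(d.+1)) (y : 'I_N -> R)
    (wstar : 'cV[R]_(d.+1)) (eps : R),
    (forall n, in_loid CH (x n)) ->
    (forall n, eucl_norm2 (x n) <= B) ->
    (forall n, y n = 1 \/ y n = -1) ->
    0 < eps ->
    mink wstar wstar = - CH ->
    eucl_norm2 wstar <= M ->
    (forall n, eps <= y n * asinh (mink wstar (x n))) ->
    exists t : nat,
      ((perc_traj x y t).2)%:R <= K / (sinh eps) ^+ 2 /\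
      forall n, Num.sg (mink (perc_traj x y t).1 (x n)) = y n.
Proof.
move=> _; exists `|B * M|.
move=> N x y wstar eps _ hB hy he _ hM hm.
have s0 := sinh_gt0 he; set s := sinh eps in s0 *.
have s20 : 0 < s ^+ 2 by rewrite exprn_gt0.
have K0 : 0 <= `|B * M| / s ^+ 2 by rewrite divr_ge0 // ltW.
case: (posnP N) => [N0|N0].
  exists 0%N; split; first by [].
  by case=> m hm0; exfalso; rewrite N0 in hm0.
have S0 : dot wstar wstar <= M.
  by rewrite dotE /eucl_norm2; under eq_bigr do rewrite -expr2.
have bound : forall t, ((perc_traj x y t).2)%:R <= `|B * M| / s ^+ 2.
  move=> t; have [I1 I2] := traj_inv N0 hB hy hm t.
  move: I1 I2; set w := (perc_traj x y t).1; set k := (perc_traj x y t).2 => I1 I2.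
  rewrite -/s in I1.
  have CS := quadCS wstar w.
  have Q0 := dot_ge0 w; have S1 := dot_ge0 wstar.
  rewrite ler_pdivlMr //.
  have k0 : 0 <= k%:R :> R by [].
  have h1 : (s * k%:R) ^+ 2 <= k%:R * B * M.
    apply: le_trans (_ : dot wstar w ^+ 2 <= _).
      have h0 : 0 <= s * k%:R by rewrite mulr_ge0 // ltW.
      have h2 : 0 <= (dot wstar w - s * k%:R) * (dot wstar w + s * k%:R) by rewrite mulr_ge0 //; lra.
      nra.
    apply: le_trans CS _; rewrite mulrC; apply: ler_pM => //; lra.
  have [k00|kp] := posnP k; first by rewrite k00 mul0r normr_ge0.
  apply: le_trans (ler_norm _).
  have k1 : 1 <= k%:R :> R by rewrite ler1n.
  nra.
pose Kn := Num.truncn (`|B * M| / s ^+ 2).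
have [t0 ht0] : exists t, (perc_traj x y (t + N + N)).2 = (perc_traj x y t).2.
  have := @nat_stall (fun t => (perc_traj x y t).2) (N + N) Kn.
  rewrite /=; setoid_rewrite addnA; apply.
    by move=> t; rewrite -addnA; apply: traj_monoD.
  by move=> t; rewrite /Kn truncn_ge_nat //.
exists t0; split; first exact: bound.
move=> n.
have hc' : forall i, (i <= N + N)%N -> perc_traj x y (t0 + i) = perc_traj x y t0.
  by apply: traj_const => //; rewrite addnA.
pose s1 := ((t0 %/ N).+1 * N + n)%N.
have Hs : (s1 %% N)%N = n by rewrite /s1 modnMDl modn_small.
have hdiv := divn_eq t0 N; have hmod := ltn_pmod t0 N0.
have hn := ltn_ord n.
have e1 : s1 = (t0 + (s1 - t0))%N by rewrite /s1 mulSn; lia.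
have e2 : s1.+1 = (t0 + (s1.+1 - t0))%N by rewrite /s1 mulSn; lia.
have w1 : perc_traj x y s1 = perc_traj x y t0 by rewrite e1; apply: hc'; rewrite /s1 mulSn; lia.
have w2 : perc_traj x y s1.+1 = perc_traj x y t0 by rewrite e2; apply: hc'; rewrite /s1 mulSn; lia.
have e3 : (perc_traj x y s1.+1).2 = (perc_traj x y s1).2 by rewrite w1 w2.
have [_ ] := traj_stay N0 Hs e3.
by rewrite w1.
Qed.
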